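(* Let $V\in(\mathbb{R}\cup\{-\infty\})^{n\times p}$ have no row and no column identically equal to $-\infty$, and let $T$ be the operator $$T_i(x)=\inf_{k\in[p],\,(i,k)\in E}\Big[-V_{ik}+\max_{j\in[n],\,j\neq i}(V_{jk}+x_j)\Big],\qquad i\in[n],$$ with $E=\{(i,k): V_{ik}\neq-\infty\}$. Then for all $\lambda\in[-\infty,0]$ and all $a\in\mathbb{R}^n$, $$B(-a,-\lambda)\subset\operatorname{Col}(V)\iff T(a)\le \lambda+a.$$
   Context: $\mathbb{R}_{\max}=\mathbb{R}\cup\{-\infty\}$, with $-\infty+c=-\infty$ and the maximum of an empty family equal to $-\infty$; $\lambda+a$ denotes $(\lambda+a_i)_i$ (so $-\infty+a$ is the identically $-\infty$ vector). $\operatorname{Col}(V)=\{Vx:x\in\mathbb{R}_{\max}^p\}$ with $(Vx)_i=\max_k(V_{ik}+x_k)$. Hilbert's projective metric: $d(x,y)=\inf\{\lambda-\mu:\lambda,\mu\in\mathbb{R},\ \mu+y_i\le x_i\le\lambda+y_i\ \forall i\}\in[0,+\infty]$. For $c\in\mathbb{R}^n$ and $r\in[0,+\infty]$, $B(c,r)=\{x\in\mathbb{R}_{\max}^n: d(c,x)\le r\}$ (so $B(c,+\infty)=\mathbb{R}^n$). *)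

(* Defs.v *)
(* R : realType, R_max is embedded in \bar R as the
   elements different from +oo. *)
From HB Require Import structures.
From mathcomp Require Import all_boot all_order all_algebra.
From mathcomp Require Import all_classical all_reals ereal.
Set Implicit Arguments. Unset Strict Implicit. Unset Printing Implicit Defensive.
Import Order.TTheory GRing.Theory Num.Theory.
Local Open Scope ring_scope.
Local Open Scope ereal_scope.
Local Open Scope classical_set_scope.

Section Defs.
Variable R : realType.

(* (Vx)_i = max_k (V_ik + x_k); empty max = -oo; -oo is absorbing for + *)
Definition maxplus_apply (n p : nat) (V : 'I_n -> 'I_p -> \bar R)
  (x : 'I_p -> \bar R) : 'I_n -> \bar R :=
  fun i => \big[maxe/-oo]_(k < p) (V i k + x k).

Definition Col (n p : nat) (V : 'I_n -> 'I_p -> \bar R) : set ('I_n -> \bar R) :=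
  [set z | exists x : 'I_p -> \bar R,
      (forall k, x k != +oo) /\ z = maxplus_apply V x].

(* Hilbert's projective metric, value in [0,+oo] (inf of empty set = +oo) *)
Definition hilbert (n : nat) (x y : 'I_n -> \bar R) : \bar R :=
  ereal_inf [set z | exists l m : R,
    (forall i, (m%:E + y i <= x i) /\ (x i <= l%:E + y i)) /\
    z = ((l - m)%R)%:E].

(* B(c,r), c in R^n, r in [0,+oo];  B(c,+oo) = R^n by convention *)
Definition hball (n : nat) (c : 'I_n -> R) (r : \bar R) : set ('I_n -> \bar R) :=
  [set x | (forall i, x i != +oo) /\
           (if r is +oo then (forall i, x i \is a fin_num)
            else hilbert (fun i => (c i)%:E) x <= r)].

Definition Top (n p : nat) (V : 'I_n -> 'I_p -> \bar R) (x : 'I_n -> \bar R)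
  : 'I_n -> \bar R :=
  fun i => \big[mine/+oo]_(k < p | V i k != -oo)
             (- V i k + \big[maxe/-oo]_(j < n | j != i) (V j k + x j)).

End Defs.

(* Main.v *)
Require Import Defs.
From HB Require Import structures.
From mathcomp Require Import all_boot all_order all_algebra.
From mathcomp Require Import all_classical all_reals ereal.
From mathcomp Require Import lra.
Import Order.TTheory GRing.Theory Num.Theory.
Local Open Scope ring_scope.
Local Open Scope ereal_scope.
Local Open Scope classical_set_scope.

Lemma ball_fin (R : realType) (n : nat) (c : 'I_n -> R) (y : 'I_n -> \bar R) (r : R) :
  hilbert (fun i => (c i)%:E) y <= r%:E ->
  (forall i, y i = (fine (y i))%:E) /\
  (forall i j, ((c i - fine (y i)) - (c j - fine (y j)) <= r)%R).
Proof.
move=> H.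
have [[l [m Hlm]]|Hno] := pselect (exists l m : R, forall i,
   (m%:E + y i <= (c i)%:E) /\ ((c i)%:E <= l%:E + y i)).
  have Yf : forall i, y i = (fine (y i))%:E.
    move=> i; have [H1 H2] := Hlm i; move: H1 H2.
    by case: (y i).
  split => // i j.
  have : ((c i - fine (y i)) - (c j - fine (y j)))%:E <= hilbert (fun i => (c i)%:E) y.
    apply/ereal_infP => z [l' [m' [H' ->]]].
    have [H1 H2] := H' i; have [H3 H4] := H' j.
    move: H1 H2 H3 H4; rewrite (Yf i) (Yf j) -!EFinD !lee_fin => ? ? ? ?.
    have Hf : ((c i - fine (y i)) - (c j - fine (y j)))%:E <= (l' - m')%:E.
      rewrite lee_fin; lra.
    exact: Hf.
  move=> /le_trans /(_ H); rewrite lee_fin //.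
exfalso; move: H; rewrite /hilbert.
have -> : [set z | exists l m : R,
    (forall i, (m%:E + y i <= (c i)%:E) /\ ((c i)%:E <= l%:E + y i)) /\
    z = ((l - m)%R)%:E] = set0.
  apply/seteqP; split => z //= [l [m [Hz _]]].
  by apply: Hno; exists l, m.
by rewrite ereal_inf0.
Qed.
Lemma Vfin {R : realType} {e : \bar R} : e != +oo -> e != -oo -> exists v : R, e = v%:E.
Proof. by case: e => // v _ _; exists v. Qed.

Lemma dirA (R : realType) (n p : nat) (V : 'I_n -> 'I_p -> \bar R)
  (HV : forall i k, V i k != +oo) (a : 'I_n -> R) (mu : R) (hmu : (mu <= 0)%R)
  (H : hball (fun i => (- a i)%R) (-mu)%:E `<=` Col V) i :
  Top V (fun j => (a j)%:E) i <= (mu + a i)%:E.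
Proof.
pose w j := if j == i then (- a j)%:E else (mu - a j)%:E.
have Hw : hball (fun i => (- a i)%R) (-mu)%:E w.
  rewrite /hball /=; split; first by move=> j; rewrite /w; case: (j == i).
  rewrite /hilbert; apply: ereal_inf_lbound; exists (- mu)%R, 0%R; split; last by rewrite subr0.
  move=> j; rewrite /w; case: eqP => _; rewrite -EFinD !lee_fin; split; lra.
have [x [Hx Hwx]] := H _ Hw.
have Hj : forall j k, V j k + x k <= w j.
  move=> j k; rewrite Hwx /maxplus_apply.
  exact: (le_bigmax _ (fun k => (V j k + x k)%E) k).
have [k Hk] : exists k, (- a i)%:E <= V i k + x k.
  apply: contrapT => Hno.
  have : \big[maxe/-oo]_(k < p) (V i k + x k) < (- a i)%:E.
    apply/bigmax_ltP; split; first exact: ltNyr. move=> k _; rewrite ltNge; apply/negP => Hk.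
    by apply: Hno; exists k.
  by rewrite -/(maxplus_apply V x i) -Hwx /w eqxx ltxx.
have Vne : V i k != -oo.
  by apply/negP => /eqP Ve; move: Hk; rewrite Ve addNye leeNy_eq.
have [v Vv] := Vfin (HV i k) Vne.
have [xi Xk] : exists xi, x k = xi%:E.
  apply: Vfin; first exact: Hx.
  by apply/negP => /eqP Xe; move: Hk; rewrite Xe addeNy leeNy_eq.
move: Hk; rewrite Vv Xk -EFinD lee_fin => Hk.
rewrite /Top.
have Hm := @bigmin_le_cond _ _ _ (+oo) k (fun k => V i k != -oo) (fun k => - V i k + \big[maxe/-oo]_(j < n | j != i) (V j k + (a j)%:E)) Vne.
apply: le_trans Hm _.
rewrite Vv.
have HB : \big[maxe/-oo]_(j < n | j != i) (V j k + (a j)%:E) <= (mu + a i + v)%:E.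
  apply: bigmax_le; first exact: leNye.
  move=> j ji.
  have := Hj j k; rewrite /w (negbTE ji) Xk.
  case E : (V j k) => [u| |]; last by rewrite !addNye => _; exact: leNye.
    2: by move: (HV j k); rewrite E.
  rewrite -!EFinD !lee_fin => Hu; lra.
move: HB; case: (\big[maxe/-oo]_(j < n | j != i) (V j k + (a j)%:E)) => [b| |] //; last by move=> _; rewrite addeNy; exact: leNye.
by rewrite -EFinN -EFinD !lee_fin => Hb; lra.
Qed.
Lemma dirB (R : realType) (n p : nat) (V : 'I_n -> 'I_p -> \bar R)
  (HV : forall i k, V i k != +oo)
  (Hcol : forall k, exists i, V i k != -oo)
  (lam : \bar R) (Hlam : lam <= 0) (a : 'I_n -> R)
  (HT : forall i, Top V (fun j => (a j)%:E) i <= lam + (a i)%:E) :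
  hball (fun i => (- a i)%R) (- lam) `<=` Col V.
Proof.
have Lc : (exists mu : R, lam = mu%:E) \/ lam = -oo.
  by case: lam Hlam {HT} => [mu| |] //; [left; exists mu | right].
move=> y [Hy Hb].
have [Yf Hsp] : (forall i, y i = (fine (y i))%:E) /\
   (forall i j mu, lam = mu%:E -> ((- a i - fine (y i)) - (- a j - fine (y j)) <= - mu)%R).
  case: Lc => [[mu Emu]|Einf].
    rewrite Emu /= in Hb.
    have [H1 H2] := @ball_fin _ _ (fun i => (- a i)%R) _ _ Hb; split => // i j mu' Emu'.
    by move: Emu'; rewrite Emu => -[<-]; exact: H2.
  rewrite Einf /= in Hb; split; first by move=> i; rewrite fineK //; exact: Hb.
  by move=> i j mu; rewrite Einf.
set yr := fun i => fine (y i).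
have Yr : forall i, y i = (yr i)%:E by [].
have J : forall i, exists k v, V i k = v%:E /\
    forall j u, V j k = u%:E -> (yr i - v <= yr j - u)%R.
  move=> i; have := HT i; rewrite /Top => /bigmin_leP [|[k Vk Hk]].
    by rewrite leye_eq; case: Lc => [[mu ->]|->].
  have [v Vv] := Vfin (HV i k) Vk.
  exists k, v; split => // j u Vju.
  case: (eqVneq j i) => [Eji|ji].
    by move: Vju; rewrite Eji Vv => -[->]; lra.
  have Hle : (u + a j)%:E <= \big[maxe/-oo]_(j0 < n | j0 != i) (V j0 k + (a j0)%:E).
    rewrite EFinD -Vju.
    exact: (@le_bigmax_cond _ _ _ -oo j (fun j0 => j0 != i) (fun j0 => V j0 k + (a j0)%:E) ji).
  have H3 := le_trans (leeD (lexx (- V i k)) Hle) Hk.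
  rewrite Vv in H3.
  case: Lc => [[mu Emu]|Einf].
    rewrite Emu -EFinN -!EFinD lee_fin in H3.
    have := Hsp j i mu Emu; rewrite /yr; lra.
  by rewrite Einf addNye -EFinN -EFinD leeNy_eq in H3.
pose x k := \big[mine/+oo]_(i < n | V i k != -oo) (y i - V i k).
exists x; split.
  move=> k; have [i Vi] := Hcol k; have [v Vv] := Vfin (HV i k) Vi.
  have Hm := @bigmin_le_cond _ _ _ (+oo) i (fun i => V i k != -oo)
     (fun i => y i - V i k) Vi.
  apply/negP => /eqP E.
  by move: Hm; rewrite -/(x k) E Vv Yr -EFinB leye_eq.
apply: funext => i; rewrite /maxplus_apply; apply/eqP; rewrite eq_le; apply/andP; split.
  have [k [v [Vv Hk]]] := J i.
  apply: le_trans (le_bigmax _ (fun k => (V i k + x k)%E) k).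
  have Hx : (yr i - v)%:E <= x k.
    apply/bigmin_geP; split; first exact: leey.
    move=> j Vj; have [u Vu] := Vfin (HV j k) Vj.
    by rewrite Vu Yr -EFinB lee_fin; exact: Hk.
  rewrite Vv Yr; move: Hx; case: (x k) => [xi| |] //.
    by rewrite -EFinD !lee_fin => ?; lra.
  by move=> _; rewrite addey // leey.
apply: bigmax_le; first exact: leNye.
move=> k _.
case E : (V i k) => [v| |].
- have Vi : V i k != -oo by rewrite E.
  have Hx := @bigmin_le_cond _ _ _ (+oo) i (fun i => V i k != -oo)
     (fun i => y i - V i k) Vi.
  move: Hx; rewrite -/(x k) E Yr -EFinB.
  case: (x k) => [xi| |] //.
    by rewrite -EFinD !lee_fin => ?; lra.
  by move=> _; rewrite addeNy; exact: leNye.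
- by move: (HV i k); rewrite E.
- by rewrite addNye; exact: leNye.
Qed.

Theorem lemma3p4 (R : realType) (n p : nat) (V : 'I_n -> 'I_p -> \bar R)
  (HV : forall i k, V i k != +oo)
  (Hrow : forall i, exists k, V i k != -oo)
  (Hcol : forall k, exists i, V i k != -oo)
  (lam : \bar R) (Hlam : lam <= 0) (a : 'I_n -> R) :
  (hball (fun i => (- a i)%R) (- lam) `<=` Col V) <->
  (forall i, Top V (fun j => (a j)%:E) i <= lam + (a i)%:E).
Proof.
split; last by move=> HT; exact: dirB.
case: lam Hlam => [mu| |] // Hmu H i.
  rewrite lee_fin in Hmu.
  rewrite -EFinD; apply: dirA => //.
have Hf : forall mu : R, (mu <= 0)%R -> Top V (fun j => (a j)%:E) i <= (mu + a i)%:E.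
  move=> mu Hmu'; apply: dirA => //.
  move=> y [Hy Hb]; apply: H; split => //=.
  have [Yf _] := @ball_fin _ _ (fun i => (- a i)%R) _ _ Hb.
  by move=> j; rewrite Yf.
rewrite addNye; clear Hmu.
case E : (Top V (fun j => (a j)%:E) i) (Hf) => [t| |] // Hf'.
  have [Ht|Ht] := lerP (t - a i - 1)%R 0%R.
    by have := Hf' _ Ht; rewrite lee_fin => Hc; exfalso; clear -Hc Ht; lra.
  by have := Hf' _ (lexx 0%R); rewrite lee_fin => Hc; exfalso; clear -Hc Ht; lra.
by have := Hf' _ (lexx 0%R).
Qed.
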